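(* Let $\sigma$ be a 2-structure and $X\subsetneq V(\sigma)$ with $\sigma[X]$ prime; write $\overline{X}=V(\sigma)\setminus X$. Suppose Statement (S3) holds (there is no $Y\subseteq\overline{X}$ with $|Y|=3$ and $\sigma[X\cup Y]$ prime). If $\sigma$ is prime, then: (1) Let $e\in E(\sigma)$. If $|\langle X\rangle^{(e,e)}_\sigma|\geq 2$, then $\sigma[\langle X\rangle_\sigma]$ is constant and $E(\sigma[\langle X\rangle_\sigma])=\{e[\langle X\rangle_\sigma]\}$. Similarly, for $\alpha\in X$, if $|X^{(e,e)}_\sigma(\alpha)|\geq 2$, then $\sigma[X_\sigma(\alpha)]$ is constant and $E(\sigma[X_\sigma(\alpha)])=\{e[X_\sigma(\alpha)]\}$. (2) Let $e,f\in E(\sigma)$ be distinct. If $|\langle X\rangle^{(e,f)}_\sigma|\geq 2$, then $\sigma[\langle X\rangle_\sigma]$ is linear and $E(\sigma[\langle X\rangle_\sigma])=\{e[\langle X\rangle_\sigma],f[\langle X\rangle_\sigma]\}$. Similarly, for $\alpha\in X$, if $|X^{(e,f)}_\sigma(\alpha)|\geq 2$, then $\sigma[X_\sigma(\alpha)]$ is linear and $E(\sigma[X_\sigma(\alpha)])=\{e[X_\sigma(\alpha)],f[X_\sigma(\alpha)]\}$.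
   Context: A 2-structure $\sigma$ consists of a vertex set $V(\sigma)$ and an equivalence relation $\equiv_\sigma$ on ordered pairs of distinct vertices; $E(\sigma)$ is its set of classes; $(v,w)_\sigma$ is the class of $(v,w)$ and $[v,w]_\sigma=((v,w)_\sigma,(w,v)_\sigma)$; $\sigma[W]$ is the induced 2-structure on $W$. For $e\in E(\sigma)$ and $W\subseteq V(\sigma)$, $e[W]=e\cap(W\times W)$. A module is a set $M$ such that for all $x,y\in M$ and $v\notin M$, $(x,v)\equiv_\sigma(y,v)$ and $(v,x)\equiv_\sigma(v,y)$; $\sigma$ is prime if $|V(\sigma)|\geq3$ and its only modules are $\emptyset$, $V(\sigma)$ and singletons. A 2-structure $\tau$ is constant if $|E(\tau)|=1$; $\tau$ is linear if there exist distinct $e,f\in E(\tau)$ such that the relation $\{(v,w): v\neq w,\ [v,w]_\tau=(e,f)\}$ is a (strict) linear order on $V(\tau)$. Given $\sigma[X]$ prime: $\langle X\rangle_\sigma=\{v\in\overline{X}: X\text{ is a module of }\sigma[X\cup\{v\}]\}$; for $\alpha\in X$, $X_\sigma(\alpha)=\{v\in\overline{X}:\{\alpha,v\}\text{ is a module of }\sigma[X\cup\{v\}]\}$. For $e,f\in E(\sigma)$: $\langle X\rangle^{(e,f)}_\sigma=\{v\in\langle X\rangle_\sigma:(v,\beta)\in e,(\beta,v)\in f\}$ for any $\beta\in X$; $X^{(e,f)}_\sigma(\alpha)=\{v\in X_\sigma(\alpha):(v,\alpha)\in e,(\alpha,v)\in f\}$. *)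

(* Defs.v *)
(* Finite 2-structures: the vertex set V(sigma) is the whole finType V. *)
From mathcomp Require Import all_boot.
Set Implicit Arguments. Unset Strict Implicit. Unset Printing Implicit Defensive.

Section TwoStructures.
Variable V : finType.

Definition offd : {set V * V} := [set p | p.1 != p.2].

(* R is an equivalence relation on ordered pairs of distinct vertices:
   (V, R) is a 2-structure sigma with V(sigma) = V and ==_sigma = R. *)
Definition is_2structure (R : rel (V * V)) : Prop :=
  [/\ {in offd, reflexive R},
      {in offd &, symmetric R} &
      {in offd & &, forall p q r, R p q -> R q r -> R p r}].

Variable R : rel (V * V).

Definition cls (p : V * V) : {set V * V} := [set q in offd | R p q].

Definition Eset : {set {set V * V}} := [set cls p | p in offd].

Definition restr (e : {set V * V}) (W : {set V}) : {set V * V} := e :&: setX W W.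

Definition E_in (W : {set V}) : {set {set V * V}} :=
  [set restr (cls p) W | p in offd :&: setX W W].

Definition module_in (W M : {set V}) : bool :=
  (M \subset W) &&
  [forall x in M, forall y in M, forall v in W :\: M,
      R (x, v) (y, v) && R (v, x) (v, y)].

Definition prime_in (W : {set V}) : Prop :=
  2 < #|W| /\
  forall M : {set V}, module_in W M -> [\/ M = set0, M = W | #|M| = 1].

Definition constant_in (W : {set V}) : Prop := #|E_in W| = 1.

Definition strict_linear_on (W : {set V}) (L : rel V) : Prop :=
  [/\ {in W, forall v, ~~ L v v},
      {in W & &, forall u v w, L u v -> L v w -> L u w} &
      {in W &, forall v w, v != w -> L v w || L w v}].

Definition linear_in (W : {set V}) : Prop :=
  exists e f, [/\ e \in E_in W, f \in E_in W, e != f &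
    strict_linear_on W
      (fun v w => (v != w) && (restr (cls (v, w)) W == e)
                           && (restr (cls (w, v)) W == f))].

Definition extX (X : {set V}) : {set V} :=
  [set v in ~: X | module_in (v |: X) X].

Definition Xalpha (X : {set V}) (a : V) : {set V} :=
  [set v in ~: X | module_in (v |: X) [set a; v]].

(* <X>^{(e,f)}_sigma  (beta ranges over X; independent of beta since X is a module) *)
Definition extX_ef (X : {set V}) (e f : {set V * V}) : {set V} :=
  [set v in extX X | [forall b in X, ((v, b) \in e) && ((b, v) \in f)]].

Definition Xalpha_ef (X : {set V}) (a : V) (e f : {set V * V}) : {set V} :=
  [set v in Xalpha X a | ((v, a) \in e) && ((a, v) \in f)].

Definition S3 (X : {set V}) : Prop :=
  ~ exists Y : {set V}, [/\ Y \subset ~: X, #|Y| = 3 & prime_in (X :|: Y)].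

End TwoStructures.

(* Main.v *)
Require Import Defs.
From mathcomp Require Import all_boot.
Set Implicit Arguments. Unset Strict Implicit. Unset Printing Implicit Defensive.


Section Basics.
Variable V : finType.
Variable R : rel (V * V).
Hypothesis hR : is_2structure R.

Definition col (a b : V) := cls R (a, b).

Lemma offdE (a b : V) : ((a, b) \in offd V) = (a != b).
Proof. by rewrite inE. Qed.

Lemma cls_eq p q : p \in offd V -> q \in offd V -> (cls R p = cls R q) <-> R p q.
Proof.
case: hR => refl sym tr hp hq; split.
  move=> e; have : q \in cls R q by rewrite /cls in_set hq refl.
  by rewrite -e /cls in_set => /andP[].
move=> hpq; apply/setP => r; rewrite !inE.
case hr: (r.1 != r.2) => //=.
have hr' : r \in offd V by rewrite inE.
apply/idP/idP => h.
  by apply: (tr q p r) => //; rewrite sym.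
by apply: (tr p q r).
Qed.

Lemma col_eq a b c d : a != b -> c != d -> (col a b = col c d) <-> R (a, b) (c, d).
Proof. by move=> h1 h2; apply: cls_eq; rewrite offdE. Qed.

Lemma moduleP W M : module_in R W M <->
  M \subset W /\ (forall x y v, x \in M -> y \in M -> v \in W -> v \notin M ->
     col x v = col y v /\ col v x = col v y).
Proof.
split.
  case/andP=> sub /forallP h; split=> // x y v xM yM vW vM.
  move: (h x); rewrite xM /= => /forallP /(_ y); rewrite yM /= => /forallP /(_ v).
  rewrite inE vM vW /= => /andP[h1 h2].
  have xv : x != v by apply: contraNneq vM => <-.
  have yv : y != v by apply: contraNneq vM => <-.
  by split; apply/col_eq => //; rewrite eq_sym.
case=> sub h; apply/andP; split=> //.
apply/forallP => x; apply/implyP => xM; apply/forallP => y; apply/implyP => yM.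
apply/forallP => v; apply/implyP; rewrite inE => /andP[vM vW].
have xv : x != v by apply: contraNneq vM => <-.
have yv : y != v by apply: contraNneq vM => <-.
case: (h x y v xM yM vW vM) => h1 h2.
have vx : v != x by rewrite eq_sym.
have vy : v != y by rewrite eq_sym.
by rewrite ((col_eq xv yv).1 h1) ((col_eq vx vy).1 h2).
Qed.

End Basics.


Section Core.
Variables (V : finType) (T : eqType) (col : V -> V -> T) (P Bs : {set V}).
Variables (In : V -> V -> bool) (tp : V -> T * T) (dir : bool).
Local Notation pr a b := (col a b, col b a).

Hypothesis F1 : forall a b z, a \in P -> b \in P -> a != b -> z \in Bs ->
  ~~ In z a -> ~~ In z b -> tp a = tp b.
Hypothesis F2 : forall a b z, a \in P -> b \in P -> z \in Bs ->
  ~~ In z a -> In z b -> (if dir then pr a b = tp a else pr b a = tp b).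
Hypothesis Z : forall a, a \in P -> exists2 z, z \in Bs & ~~ In z a.
Hypothesis S : forall a b, a \in P -> b \in P -> a != b -> tp a = tp b ->
  exists2 z, z \in Bs & In z a != In z b.

Lemma cross a b : a \in P -> b \in P -> tp a != tp b -> pr a b = tp a /\ pr b a = tp b.
Proof.
move=> aP bP ne.
have ab : a != b by apply: contraNneq ne => ->.
case: (Z aP) => z zB nza.
have zb : In z b by apply: contraNT ne => nzb; apply/eqP; apply: F1 aP bP ab zB nza nzb.
case: (Z bP) => z' zB' nzb.
have za : In z' a by apply: contraNT ne => nza'; apply/eqP; apply: F1 aP bP ab zB' nza' nzb.
have h1 := F2 aP bP zB nza zb. have h2 := F2 bP aP zB' nzb za.
by case: dir h1 h2.
Qed.

Lemma same a b : a \in P -> b \in P -> a != b -> tp a = tp b ->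
  pr a b = tp a \/ pr b a = tp a.
Proof.
move=> aP bP ab e; case: (S aP bP ab e) => z zB.
case za: (In z a); case zb: (In z b) => //= _.
  have := F2 bP aP zB (negbT zb) za.
  by case: dir => h; [right; rewrite h e | left].
have := F2 aP bP zB (negbT za) zb.
by case: dir => h; [left | right; rewrite h e].
Qed.

Lemma types v e f : v \in P -> tp v = (e, f) ->
  forall u, u \in P -> tp u = (e, f) \/ tp u = (f, e).
Proof.
move=> vP tv u uP; case: (eqVneq (tp u) (tp v)) => [->|ne]; first by left.
have [h1 h2] := cross uP vP ne; right; rewrite -h1.
by move: h2; rewrite tv => -[-> ->].
Qed.

Lemma C1 v e : v \in P -> tp v = (e, e) ->
  forall a b, a \in P -> b \in P -> a != b -> col a b = e.
Proof.
move=> vP tv a b aP bP ab.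
have ta : tp a = (e, e) by case: (types vP tv aP).
have tb : tp b = (e, e) by case: (types vP tv bP).
case: (same aP bP ab (etrans ta (esym tb))); rewrite ta; by case.
Qed.

Lemma C2pair v e f : v \in P -> tp v = (e, f) ->
  forall a b, a \in P -> b \in P -> a != b -> pr a b = (e, f) \/ pr a b = (f, e).
Proof.
move=> vP tv a b aP bP ab.
case: (eqVneq (tp a) (tp b)) => [eq0|ne].
  case: (same aP bP ab eq0) => h.
    by rewrite h; apply: (types vP tv aP).
  case: (types vP tv aP); rewrite -h => -[-> ->]; by [right | left].
have [h _] := cross aP bP ne; rewrite h; exact: (types vP tv aP).
Qed.

Lemma C2trans v e f : v \in P -> tp v = (e, f) -> e != f ->
  forall a b c, a \in P -> b \in P -> c \in P ->
  pr a b = (e, f) -> pr b c = (e, f) -> pr a c = (e, f).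
Proof.
move=> vP tv ef a b c aP bP cP pab pbc.
have ab : a != b by apply/eqP => E; subst b; case: pab => h1 h2; move: ef; rewrite -h1 -h2 eqxx.
have bc : b != c by apply/eqP => E; subst c; case: pbc => h1 h2; move: ef; rewrite -h1 -h2 eqxx.
have ac : a != c.
  apply/eqP => E; subst c; case: pab => h1 _; case: pbc => _ h2.
  by move: ef; rewrite -h1 -h2 eqxx.
case: (C2pair vP tv aP cP ac) => // pac; exfalso.
have pba : pr b a = (f, e) by case: pab => -> ->.
have pcb : pr c b = (f, e) by case: pbc => -> ->.
have pca : pr c a = (e, f) by case: pac => -> ->.
have fin : forall p q : T * T, p = q -> p = (e, f) -> q = (f, e) -> False.
  by move=> p q -> -> [] fe; move: ef; rewrite fe eqxx.
have oddc : forall x y w, x \in P -> y \in P -> w \in P -> tp x = tp y -> tp x != tp w ->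
    pr x w = (e, f) -> pr y w = (f, e) -> False.
  move=> x y w xP yP wP exy nxw h1 h2.
  have [c1 _] := cross xP wP nxw.
  have nyw : tp y != tp w by rewrite -exy.
  have [c2 _] := cross yP wP nyw.
  by apply: (fin _ _ _ h1 h2); rewrite c1 c2 exy.
have tab := types vP tv aP; have tbb := types vP tv bP; have tcb := types vP tv cP.
have nef : (e, f) != (f, e) by apply/eqP => -[E _]; move: ef; rewrite E eqxx.
have nfe : (f, e) != (e, f) by rewrite eq_sym.
case: (eqVneq (tp a) (tp b)) => [eab|nab].
  case: (eqVneq (tp a) (tp c)) => [eac|nac]; last first.
    have nbc : tp b != tp c by rewrite -eab.
    exact: (oddc b a c bP aP cP (esym eab) nbc pbc pac).
  have fin' : forall p q : T * T, p = q ->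
      (p = (e, f) /\ q = (f, e)) \/ (p = (f, e) /\ q = (e, f)) -> False.
    move=> p q -> [[-> E]|[-> E]]; case: E => E _; by move: ef; rewrite E eqxx.
  case: (S aP bP ab eab) => z zB.
  case za: (In z a); case zb: (In z b) => //= _.
    case zc: (In z c).
      have h1 := F2 bP aP zB (negbT zb) za; have h2 := F2 bP cP zB (negbT zb) zc.
      case: dir h1 h2 => h1 h2.
        by apply: (fin' (pr b a) (pr b c)); [rewrite h1 h2 | right].
      by apply: (fin' (pr a b) (pr c b)); [rewrite h1 h2 eac | left].
    have h1 := F2 bP aP zB (negbT zb) za; have h2 := F2 cP aP zB (negbT zc) za.
    case: dir h1 h2 => h1 h2.
      by apply: (fin' (pr b a) (pr c a)); [rewrite h1 h2 -eab eac | right].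
    by apply: (fin' (pr a b) (pr a c)); [rewrite h1 h2 | left].
  case zc: (In z c).
    have h1 := F2 aP bP zB (negbT za) zb; have h2 := F2 aP cP zB (negbT za) zc.
    case: dir h1 h2 => h1 h2.
      by apply: (fin' (pr a b) (pr a c)); [rewrite h1 h2 | left].
    by apply: (fin' (pr b a) (pr c a)); [rewrite h1 h2 -eab eac | right].
  have h1 := F2 aP bP zB (negbT za) zb; have h2 := F2 cP bP zB (negbT zc) zb.
  case: dir h1 h2 => h1 h2.
    by apply: (fin' (pr a b) (pr c b)); [rewrite h1 h2 eac | left].
  by apply: (fin' (pr b a) (pr b c)); [rewrite h1 h2 | right].
case: (eqVneq (tp c) (tp a)) => [eca|nca].
  exact: (oddc a c b aP cP bP (esym eca) nab pab pcb).
have ecb : tp c = tp b.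
  move: nab nca; case: tab => ->; case: tbb => ->; case: tcb => -> //; by rewrite eqxx.
exact: (oddc c b a cP bP aP ecb nca pca pba).
Qed.

End Core.


Section Main.
Variable V : finType.
Variable R : rel (V * V).
Hypothesis hR : is_2structure R.
Variable X : {set V}.
Hypothesis hXp : prime_in R X.
Local Notation col := (col R).
Local Notation pr a b := (col a b, col b a).

Lemma X3 : 2 < #|X|. Proof. by case: hXp. Qed.

Lemma modP (W M : {set V}) : module_in R W M <->
  M \subset W /\ (forall x y v, x \in M -> y \in M -> v \in W -> v \notin M ->
     col x v = col y v /\ col v x = col v y).
Proof. exact: moduleP. Qed.

Lemma mod_restr (W W' M : {set V}) : W' \subset W -> module_in R W M -> module_in R W' (M :&: W').
Proof.
move=> sW /modP [sM h]; apply/modP; split; first exact: subsetIr.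
move=> x y v; rewrite !inE => /andP[xM _] /andP[yM _] vW'.
rewrite vW' andbT => vM; apply: h => //; exact: (subsetP sW).
Qed.

Lemma small1 (M : {set V}) z : M \subset [set z] -> M = set0 \/ #|M| = 1.
Proof. by rewrite subset1 => /orP[/eqP ->|/eqP ->]; [right; rewrite cards1 | left]. Qed.

Lemma extXP v : v \in extX R X <-> v \notin X /\
  (forall x y, x \in X -> y \in X -> col x v = col y v /\ col v x = col v y).
Proof.
rewrite /extX inE in_setC; split.
  case/andP => vX /modP [_ h]; split=> // x y xX yX.
  by apply: h => //; apply: setU11.
case=> vX h; rewrite vX /=; apply/modP; split; first exact: subsetUr.
move=> x y w xX yX /setU1P [-> _|wX /negP //]; exact: h.
Qed.

Lemma XalphaP a v : a \in X -> v \in Xalpha R X a <-> v \notin X /\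
  (forall x, x \in X -> x != a -> col a x = col v x /\ col x a = col x v).
Proof.
move=> aX; rewrite /Xalpha inE in_setC; split.
  case/andP => vX /modP [_ h]; split=> // x xX xa.
  have xv : x != v by apply: contraNneq vX => <-.
  apply: h; rewrite ?inE ?eqxx ?orbT ?xX ?(negbTE xa) ?(negbTE xv) //.
case=> vX h; rewrite vX /=; apply/modP; split.
  by apply/subsetP => x; rewrite !inE => /orP[/eqP ->|/eqP ->]; rewrite ?aX ?eqxx ?orbT.
move=> x y w /set2P hx /set2P hy /setU1P hw; rewrite !inE negb_or => /andP[wa wv].
have wX : w \in X by case: hw wv => [->|//]; rewrite eqxx.
have [h1 h2] := h w wX wa.
by case: hx => ->; case: hy => ->; split; rewrite ?h1 ?h2.
Qed.


Lemma Xminus_notmod beta : beta \in X ->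
  (forall x y, x \in X -> y \in X -> x != beta -> y != beta ->
     col x beta = col y beta /\ col beta x = col beta y) -> False.
Proof.
move=> bX h.
have hm : module_in R X (X :\ beta).
  apply/modP; split; first exact: subsetDl.
  move=> x y v; rewrite !inE => /andP[xb xX] /andP[yb yX] vX.
  rewrite vX andbT negbK => /eqP ->; exact: h.
have c := X3; have cD := cardsD1 beta X; rewrite bX in cD.
case: hXp => _ /(_ _ hm) [E|E|E].
- by move: cD; rewrite E cards0 => cD; rewrite cD in c.
- by move: bX; rewrite -E !inE eqxx.
- by move: cD; rewrite E => cD; rewrite cD in c.
Qed.

Lemma pair_notmod al beta : al \in X -> beta \in X -> al != beta ->
  (forall x, x \in X -> x != al -> x != beta ->
     col x al = col x beta /\ col al x = col beta x) -> False.
Proof.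
move=> aX bX ab h.
have hm : module_in R X [set al; beta].
  apply/modP; split; first by apply/subsetP => x; rewrite !inE => /orP[]/eqP ->.
  move=> x y v; rewrite !inE => /orP[]/eqP -> /orP[]/eqP -> vX; rewrite negb_or => /andP[va vb];
  have [h1 h2] := h v vX va vb; by split.
have c := X3; have c2 := cards2 al beta; rewrite ab in c2.
case: hXp => _ /(_ _ hm) [E|E|E].
- by move: (set21 al beta); rewrite E inE.
- by move: c; rewrite -E c2.
- by move: c2; rewrite E.
Qed.

Lemma ext_notXalpha v al : al \in X -> v \in extX R X -> v \in Xalpha R X al -> False.
Proof.
move=> aX /extXP [vX he] /(XalphaP _ aX) [_ ha].
apply: (Xminus_notmod aX) => x y xX yX xa ya.
have [h1 h2] := ha x xX xa; have [h3 h4] := ha y yX ya.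
have [h5 h6] := he x y xX yX.
by rewrite h1 h2 h3 h4 h5 h6.
Qed.

Lemma Wcases a b z y : y \in X :|: [set a; b; z] ->
  [\/ y \in X, y = a, y = b | y = z].
Proof.
rewrite !inE => /orP[yX|/orP[/orP[/eqP->|/eqP->]|/eqP->]]; by [constructor 1|constructor 2|constructor 3|constructor 4].
Qed.

Lemma sub1W (M : {set V}) a b z w : M \subset X :|: [set a; b; z] ->
  (forall y, y \in M -> y \in X -> y = w) -> (a \in M -> a = w) ->
  (b \in M -> b = w) -> (z \in M -> z = w) ->
  [\/ M = set0, M = X :|: [set a; b; z] | #|M| = 1].
Proof.
move=> sM hX ha hb hz.
suff : M = set0 \/ #|M| = 1 by case=> ?; [constructor 1|constructor 3].
apply: (@small1 M w); apply/subsetP => y yM.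
rewrite inE; apply/eqP.
by case: (Wcases (subsetP sM y yM)) => [yX|E|E|E]; subst; auto.
Qed.

Lemma W3 a b z : 2 < #|X :|: [set a; b; z]|.
Proof. exact: leq_trans X3 (subset_leq_card (subsetUl _ _)). Qed.

Lemma inW a b z : [/\ a \in X :|: [set a; b; z], b \in X :|: [set a; b; z],
   z \in X :|: [set a; b; z] & forall x, x \in X -> x \in X :|: [set a; b; z]].
Proof.
split; try by rewrite !inE !eqxx ?orbT.
by move=> x xX; rewrite inE xX.
Qed.

Lemma meet_cases (M : {set V}) a b z : module_in R (X :|: [set a; b; z]) M ->
  [\/ forall x, x \in X -> x \in M, forall x, x \in X -> x \notin M |
      exists2 beta, beta \in X /\ beta \in M & forall x, x \in X -> x != beta -> x \notin M].
Proof.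
move=> hM; have hMX := mod_restr (subsetUl X [set a; b; z]) hM.
case: hXp => _ /(_ _ hMX) [E|E|/eqP/cards1P [beta E]].
- constructor 2 => x xX; apply/negP => xM.
  have : x \in M :&: X by rewrite inE xM xX.
  by rewrite E inE.
- constructor 1 => x xX.
  have : x \in M :&: X by rewrite E.
  by rewrite inE => /andP[].
constructor 3; exists beta.
  have : beta \in M :&: X by rewrite E set11.
  by rewrite inE => /andP[-> ->].
move=> x xX xb; apply/negP => xM.
have : x \in M :&: X by rewrite inE xM xX.
by rewrite E inE; exact/negP.
Qed.


Lemma card3 (a b z : V) : a != b -> a != z -> b != z -> #|[set a; b; z]| = 3.
Proof. move=> ab az bz. by rewrite -setUA cardsU1 cards2 !inE negb_or ab az bz. Qed.

Hypothesis hS3 : S3 R X.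

Lemma noprime3 a b z : a \notin X -> b \notin X -> z \notin X -> a != b -> a != z -> b != z ->
  ~ prime_in R (X :|: [set a; b; z]).
Proof.
move=> aX bX zX ab az bz hp; apply: hS3; exists [set a; b; z]; split => //.
  by apply/subsetP => y; rewrite !inE => /orP[/orP[]|]/eqP ->; rewrite ?aX ?bX ?zX.
exact: card3.
Qed.

Section ACase.
Variable x0 : V.
Hypothesis hx0 : x0 \in X.

Definition PA := extX R X.
Definition BsA := ~: (X :|: PA).
Definition InA z a := (col a z == col a x0) && (col z a == col x0 a).
Definition tpA a := (col a x0, col x0 a).
Definition nd z a b := (col z a == col z b) && (col a z == col b z).

Lemma tripleA a b z : a \in PA -> b \in PA -> a != b -> z \in BsA ->
  [|| InA z a && InA z b, InA z b && (pr b a == tpA b),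
      InA z a && (pr a b == tpA a) | (tpA a == tpA b) && nd z a b].
Proof.
move=> aP bP ab zB.
have [aX ha] := (extXP a).1 aP.
have [bX hb] := (extXP b).1 bP.
have [zX zP] : z \notin X /\ z \notin PA by move: zB; rewrite !inE negb_or => /andP[].
have az : a != z by apply: contraNneq zP => <-.
have bz : b != z by apply: contraNneq zP => <-.
apply/negPn/negP => nQ.
apply: (noprime3 aX bX zX ab az bz); split; first exact: W3.
move=> M hM; have [sM hMu] := (modP _ _).1 hM.
have [Wa Wb Wz WX] := inW a b z.
case: (meet_cases hM) => [XM|XnM|[beta [bX' bM] nM]].
- have zM : z \in M.
    apply: contraNT zP => zM; apply/extXP; split=> // x y xX yX.
    exact: hMu (XM x xX) (XM y yX) Wz zM.
  case aM: (a \in M); case bM: (b \in M).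
  + constructor 2; apply/eqP; rewrite eqEsubset sM; apply/subsetP => y /Wcases [yX|->|->|->] //.
    exact: XM.
  + have [h1 h2] := hMu x0 z b (XM x0 hx0) zM Wb (negbT bM).
    have [h3 h4] := hMu x0 a b (XM x0 hx0) aM Wb (negbT bM).
    have Ib : InA z b by rewrite /InA -h1 -h2 !eqxx.
    have Eb : pr b a == tpA b by rewrite /tpA -h3 -h4.
    by move: nQ; rewrite Ib Eb !orbT.
  + have [h1 h2] := hMu x0 z a (XM x0 hx0) zM Wa (negbT aM).
    have [h3 h4] := hMu x0 b a (XM x0 hx0) bM Wa (negbT aM).
    have Ia : InA z a by rewrite /InA -h1 -h2 !eqxx.
    have Ea : pr a b == tpA a by rewrite /tpA -h3 -h4.
    by move: nQ; rewrite Ia Ea !orbT.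
  + have [h1 h2] := hMu x0 z a (XM x0 hx0) zM Wa (negbT aM).
    have [h3 h4] := hMu x0 z b (XM x0 hx0) zM Wb (negbT bM).
    have Ia : InA z a by rewrite /InA -h1 -h2 !eqxx.
    have Ib : InA z b by rewrite /InA -h3 -h4 !eqxx.
    by move: nQ; rewrite Ia Ib.
- case zM: (z \in M).
  + have noc : forall c, c \in PA -> c \in M -> False.
      move=> c cP cM; apply: (negP zP); apply/extXP; split=> // x y xX yX.
      have [_ hc] := (extXP c).1 cP.
      have [h1 h2] := hMu z c x zM cM (WX x xX) (XnM x xX).
      have [h3 h4] := hMu z c y zM cM (WX y yX) (XnM y yX).
      have [h5 h6] := hc x y xX yX.
      by rewrite h1 h2 h3 h4 h5 h6.
    apply: (@sub1W M a b z z sM) => [y yM yX|aM|bM|//]; exfalso.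
    * by move: (XnM y yX); rewrite yM.
    * exact: noc a aP aM.
    * exact: noc b bP bM.
  + case aM: (a \in M); case bM: (b \in M).
    * have [h1 h2] := hMu a b x0 aM bM (WX x0 hx0) (XnM x0 hx0).
      have [h3 h4] := hMu a b z aM bM Wz (negbT zM).
      have E : (tpA a == tpA b) && nd z a b by rewrite /tpA /nd h1 h2 h3 h4 !eqxx.
      by move: nQ; rewrite E !orbT.
    * apply: (@sub1W M a b z a sM) => // [y yM yX|bM'|zM'].
      - by move: (XnM y yX); rewrite yM.
      - by rewrite bM'  in bM.
      - by rewrite zM' in zM.
    * apply: (@sub1W M a b z b sM) => // [y yM yX|aM'|zM'].
      - by move: (XnM y yX); rewrite yM.
      - by rewrite aM'  in aM.
      - by rewrite zM' in zM.
    * apply: (@sub1W M a b z b sM) => // [y yM yX|aM'|zM'].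
      - by move: (XnM y yX); rewrite yM.
      - by rewrite aM'  in aM.
      - by rewrite zM' in zM.
- have noc : forall c, c \in PA -> c \in M -> False.
    move=> c cP cM; have [_ hc] := (extXP c).1 cP.
    apply: (Xminus_notmod bX') => x y xX yX xb yb.
    have [h1 h2] := hMu beta c x bM cM (WX x xX) (nM x xX xb).
    have [h3 h4] := hMu beta c y bM cM (WX y yX) (nM y yX yb).
    have [h5 h6] := hc x y xX yX.
    by rewrite h1 h2 h3 h4 h5 h6.
  have aM : a \notin M by apply/negP => /(noc a aP).
  have bM' : b \notin M by apply/negP => /(noc b bP).
  case zM: (z \in M).
  + have [h1 h2] := hMu beta z a bM zM Wa aM.
    have [h3 h4] := hMu beta z b bM zM Wb bM'.
    have [h5 h6] := ha beta x0 bX' hx0.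
    have [h7 h8] := hb beta x0 bX' hx0.
    have Ia : InA z a by rewrite /InA -h1 -h2 h5 h6 !eqxx.
    have Ib : InA z b by rewrite /InA -h3 -h4 h7 h8 !eqxx.
    by move: nQ; rewrite Ia Ib.
  + apply: (@sub1W M a b z beta sM) => [y yM yX|aM'|bM''|zM'].
    * by case: (eqVneq y beta) => // yb; move: (nM y yX yb); rewrite yM.
    * by rewrite aM' in aM.
    * by rewrite bM'' in bM'.
    * by rewrite zM' in zM.
Qed.


Lemma F1A a b z : a \in PA -> b \in PA -> a != b -> z \in BsA ->
  ~~ InA z a -> ~~ InA z b -> tpA a = tpA b /\ nd z a b.
Proof.
move=> aP bP ab zB na nb.
have := tripleA aP bP ab zB; rewrite (negbTE na) (negbTE nb) /= => /andP[/eqP -> ->].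
by [].
Qed.

Lemma F2A a b z : a \in PA -> b \in PA -> z \in BsA ->
  ~~ InA z a -> InA z b -> pr b a = tpA b.
Proof.
move=> aP bP zB na ib.
have ab : a != b by apply: contraNneq na => ->.
have := tripleA aP bP ab zB; rewrite (negbTE na) ib /= => /orP[/eqP //|].
case/andP => /eqP E /andP[/eqP h1 /eqP h2]; exfalso; move/negP: na; apply.
move: ib E; rewrite /InA /tpA => /andP[/eqP h3 /eqP h4] [h5 h6].
by rewrite h1 h2 h3 h4 h5 h6 !eqxx.
Qed.

Lemma PA_notX y : y \in PA -> y \notin X.
Proof. by case/extXP. Qed.

Lemma V3cases y : [\/ y \in X, y \in PA | y \in BsA].
Proof.
case yX: (y \in X); first by constructor 1.
case yP: (y \in PA); first by constructor 2.
by constructor 3; rewrite /BsA in_setC in_setU yX yP.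
Qed.

Hypothesis hVp : prime_in R [set: V].

Lemma mod_unif (M : {set V}) :
  (forall y, y \notin M -> exists g, forall m, m \in M -> (col m y, col y m) = g) ->
  module_in R [set: V] M.
Proof.
move=> h; apply/modP; split; first exact: subsetT.
move=> x y v xM yM _ vM; have [g hg] := h v vM.
have E1 := hg y yM; have E2 := hg x xM; rewrite -E2 in E1; case: E1 => h1 h2; by rewrite h1 h2.
Qed.

Lemma prime_setT (M : {set V}) a b : module_in R [set: V] M -> a \in M -> b \in M -> a != b ->
  M = [set: V].
Proof.
move=> hM aM bM ab; case: hVp => _ /(_ _ hM) [E|//|/eqP/cards1P [c E]].
  by move: aM; rewrite E inE.
by move: aM bM ab; rewrite E !inE => /eqP -> /eqP ->; rewrite eqxx.
Qed.

Lemma ZA a : a \in PA -> exists2 z, z \in BsA & ~~ InA z a.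
Proof.
move=> aP; case: (boolP [exists z in BsA, ~~ InA z a]).
  by case/exists_inP => z; exists z.
move=> nex; exfalso.
pose As := [set u in PA | [forall z in BsA, InA z u]].
have aA : a \in As.
  rewrite inE aP /=; apply/forall_inP => z zB.
  by apply: contraNT nex => nz; apply/exists_inP; exists z.
have hM : module_in R [set: V] (~: As).
  apply: mod_unif => y; rewrite inE negbK => yA.
  move: (yA); rewrite inE => /andP[yP /forall_inP yall].
  have [_ hy] := (extXP y).1 yP.
  exists (col x0 y, col y x0) => m mA.
  case: (V3cases m) => [mX|mP|mB].
  - by have [h1 h2] := hy m x0 mX hx0; rewrite h1 h2.
  - move: mA; rewrite in_setC inE mP /= => /forall_inPn [z zB nz].
    have := F2A mP yP zB nz (yall z zB); by case=> -> ->.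
  - by move: (yall m mB); rewrite /InA => /andP[/eqP -> /eqP ->].
have [x1 [x2 [x1X x2X x12]]] : exists x1 x2, [/\ x1 \in X, x2 \in X & x1 != x2].
  have : 1 < #|X| by apply: ltnW X3.
  case/card_gt1P => x1 [x2 [h1 h2 h3]]; by exists x1, x2.
have nA : forall x, x \in X -> x \in ~: As.
  move=> x xX; rewrite in_setC; apply/negP; rewrite inE => /andP[xP _].
  by move: (PA_notX xP); rewrite xX.
have E := prime_setT hM (nA _ x1X) (nA _ x2X) x12.
by move: (in_setT a); rewrite -E in_setC aA.
Qed.

Lemma SA a b : a \in PA -> b \in PA -> a != b -> tpA a = tpA b ->
  exists2 z, z \in BsA & InA z a != InA z b.
Proof.
move=> aP bP ab tab; case: (boolP [exists z in BsA, InA z a != InA z b]).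
  by case/exists_inP => z; exists z.
move=> nex; exfalso.
have hab : forall z, z \in BsA -> InA z b = InA z a.
  move=> z zB; apply/eqP; apply: contraNT nex => ne; apply/exists_inP; exists z => //.
  by rewrite eq_sym.
pose M := [set u in PA | (tpA u == tpA a) && [forall z in BsA, InA z u == InA z a]].
have aM : a \in M by rewrite inE aP eqxx /=; apply/forall_inP => z _.
have bM : b \in M by rewrite inE bP tab eqxx /=; apply/forall_inP => z zB; rewrite hab.
have Mprop : forall m, m \in M ->
    [/\ m \in PA, tpA m = tpA a & forall z, z \in BsA -> InA z m = InA z a].
  move=> m; rewrite inE => /and3P[mP /eqP tm /forall_inP hm]; split=> // z zB.
  exact/eqP/hm.
have hM : module_in R [set: V] M.
  apply: mod_unif => y yM.
  case: (V3cases y) => [yX|yP|yB].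
  - exists (tpA a) => m /Mprop [mP tm _].
    have [_ hm] := (extXP m).1 mP.
    have [h1 h2] := hm y x0 yX hx0.
    by rewrite -tm /tpA h1 h2.
  - case: (boolP [exists z in BsA, InA z y != InA z a]).
      case/exists_inP => z zB ne; case Iy: (InA z y).
        have Ia : InA z a = false by move: ne; rewrite Iy; case: (InA z a).
        exists (col x0 y, col y x0) => m /Mprop [mP tm hm].
        have nzm : ~~ InA z m by rewrite hm // Ia.
        have := F2A mP yP zB nzm Iy.
        by case=> -> ->.
      have Ia : InA z a = true by move: ne; rewrite Iy; case: (InA z a).
      exists (tpA a) => m /Mprop [mP tm hm].
      have zm : InA z m by rewrite hm.
      by rewrite -tm; apply: F2A yP mP zB (negbT Iy) zm.
    move=> nex'; exfalso.
    have ya : y != a by apply: contraNneq yM => ->.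
    move/negP: yM; apply.
    have hy : forall z, z \in BsA -> InA z y = InA z a.
      move=> z zB; apply/eqP; apply: contraNT nex' => ne; apply/exists_inP; exists z => //.
    case: (ZA yP) => z zB nz.
    have nza : ~~ InA z a by rewrite -hy.
    have [ty _] := F1A yP aP ya zB nz nza.
    rewrite inE yP ty eqxx /=; apply/forall_inP => z' z'B; by rewrite hy.
  - case Ia: (InA y a).
      exists (tpA a) => m /Mprop [mP tm hm].
      move: (hm y yB); rewrite Ia /InA => /andP[/eqP h1 /eqP h2].
      by rewrite -tm /tpA h1 h2.
    exists (col a y, col y a) => m /Mprop [mP tm hm].
    case: (eqVneq m a) => [->//|ma].
    have n1 : ~~ InA y m by rewrite hm // Ia.
    have n2 : ~~ InA y a by rewrite Ia.
    have [_ /andP[/eqP h1 /eqP h2]] := F1A mP aP ma yB n1 n2.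
    by rewrite h1 h2.
have E := prime_setT hM aM bM ab.
have : x0 \in M by rewrite E in_setT.
by case/Mprop => /PA_notX; rewrite hx0.
Qed.
End ACase.


Section XCase.
Variable al : V.
Hypothesis hal : al \in X.

Definition PX := Xalpha R X al.
Definition BsX := ~: (X :|: PX).
Definition InX z a := (col z a == col z al) && (col a z == col al z).
Definition tpX a := (col a al, col al a).

Lemma PX_notX y : y \in PX -> y \notin X.
Proof. by case/(XalphaP _ hal). Qed.

Lemma V3casesX y : [\/ y \in X, y \in PX | y \in BsX].
Proof.
case yX: (y \in X); first by constructor 1.
case yP: (y \in PX); first by constructor 2.
by constructor 3; rewrite /BsX in_setC in_setU yX yP.
Qed.

Lemma other_al : exists2 x, x \in X & x != al.
Proof.
have : 1 < #|X| by apply: ltnW X3.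
case/card_gt1P => x1 [x2 [h1 h2 h3]].
case: (eqVneq x1 al) => [E|n1]; last by exists x1.
by exists x2 => //; rewrite -E eq_sym.
Qed.

Lemma tripleX a b z : a \in PX -> b \in PX -> a != b -> z \in BsX ->
  [|| InX z a && InX z b, InX z a && InX b a,
      InX z b && InX a b | (tpX a == tpX b) && nd z a b].
Proof.
move=> aP bP ab zB.
have [aX ha] := (XalphaP _ hal).1 aP.
have [bX hb] := (XalphaP _ hal).1 bP.
have [zX zP] : z \notin X /\ z \notin PX by move: zB; rewrite /BsX in_setC in_setU negb_or => /andP[].
have az : a != z by apply: contraNneq zP => <-.
have bz : b != z by apply: contraNneq zP => <-.
apply/negPn/negP => nQ.
apply: (noprime3 aX bX zX ab az bz); split; first exact: W3.
move=> M hM; have [sM hMu] := (modP _ _).1 hM.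
have [Wa Wb Wz WX] := inW a b z.
have alW := WX al hal.
case: (meet_cases hM) => [XM|XnM|[beta [bX' bM] nM]].
- have noc : forall c, c \in PX -> c \in X :|: [set a; b; z] -> c \notin M -> False.
    move=> c cP cW cM; apply: (ext_notXalpha hal _ cP); apply/extXP; split.
      exact: PX_notX.
    move=> x y xX yX; exact: hMu (XM x xX) (XM y yX) cW cM.
  have aM : a \in M by apply/negPn/negP => /(noc a aP Wa).
  have bM : b \in M by apply/negPn/negP => /(noc b bP Wb).
  case zM: (z \in M).
    constructor 2; apply/eqP; rewrite eqEsubset sM; apply/subsetP => y /Wcases [yX|->|->|->] //.
    exact: XM.
  have [h1 h2] := hMu al a z (XM al hal) aM Wz (negbT zM).
  have [h3 h4] := hMu al b z (XM al hal) bM Wz (negbT zM).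
  have Ia : InX z a by rewrite /InX h1 h2 !eqxx.
  have Ib : InX z b by rewrite /InX h3 h4 !eqxx.
  by move: nQ; rewrite Ia Ib.
- case zM: (z \in M).
  + have noc : forall c, c \in PX -> c \in M -> False.
      move=> c cP cM; apply: (negP zP); apply/(XalphaP _ hal); split=> // x xX xa.
      have [_ hc] := (XalphaP _ hal).1 cP.
      have [h1 h2] := hMu z c x zM cM (WX x xX) (XnM x xX).
      have [h3 h4] := hc x xX xa.
      by rewrite h1 h2 h3 h4.
    apply: (@sub1W M a b z z sM) => [y yM yX|aM|bM|//]; exfalso.
    * by move: (XnM y yX); rewrite yM.
    * exact: noc a aP aM.
    * exact: noc b bP bM.
  + case aM: (a \in M); case bM: (b \in M).
    * have [h1 h2] := hMu a b al aM bM alW (XnM al hal).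
      have [h3 h4] := hMu a b z aM bM Wz (negbT zM).
      have E : (tpX a == tpX b) && nd z a b by rewrite /tpX /nd h1 h2 h3 h4 !eqxx.
      by move: nQ; rewrite E !orbT.
    * apply: (@sub1W M a b z a sM) => // [y yM yX|bM'|zM'].
      - by move: (XnM y yX); rewrite yM.
      - by rewrite bM'  in bM.
      - by rewrite zM' in zM.
    * apply: (@sub1W M a b z b sM) => // [y yM yX|aM'|zM'].
      - by move: (XnM y yX); rewrite yM.
      - by rewrite aM'  in aM.
      - by rewrite zM' in zM.
    * apply: (@sub1W M a b z b sM) => // [y yM yX|aM'|zM'].
      - by move: (XnM y yX); rewrite yM.
      - by rewrite aM'  in aM.
      - by rewrite zM' in zM.
- case: (eqVneq beta al) => [Eb|nb].
  + subst beta.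
    have zM : z \notin M.
      apply/negP => zM; apply: (negP zP); apply/(XalphaP _ hal); split=> // x xX xa.
      exact: hMu al z x bM zM (WX x xX) (nM x xX xa).
    case aM: (a \in M); case bM': (b \in M).
    * have [h1 h2] := hMu al a z bM aM Wz zM.
      have [h3 h4] := hMu al b z bM bM' Wz zM.
      have Ia : InX z a by rewrite /InX h1 h2 !eqxx.
      have Ib : InX z b by rewrite /InX h3 h4 !eqxx.
      by move: nQ; rewrite Ia Ib.
    * have [h1 h2] := hMu al a z bM aM Wz zM.
      have [h3 h4] := hMu al a b bM aM Wb (negbT bM').
      have Ia : InX z a by rewrite /InX h1 h2 !eqxx.
      have Iba : InX b a by rewrite /InX h3 h4 !eqxx.
      by move: nQ; rewrite Ia Iba !orbT.
    * have [h1 h2] := hMu al b z bM bM' Wz zM.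
      have [h3 h4] := hMu al b a bM bM' Wa (negbT aM).
      have Ib : InX z b by rewrite /InX h1 h2 !eqxx.
      have Iab : InX a b by rewrite /InX h3 h4 !eqxx.
      by move: nQ; rewrite Ib Iab !orbT.
    * apply: (@sub1W M a b z al sM) => [y yM yX|aM'|bM''|zM'].
      - by case: (eqVneq y al) => // yb; move: (nM y yX yb); rewrite yM.
      - by rewrite aM' in aM.
      - by rewrite bM'' in bM'.
      - by rewrite zM' in zM.
  + have alM : al \notin M by apply: nM => //; rewrite eq_sym.
    have noc : forall c, c \in PX -> c \in M -> False.
      move=> c cP cM; have [_ hc] := (XalphaP _ hal).1 cP.
      apply: (pair_notmod hal bX' (negbT (introF eqP (fun E => negP nb (introT eqP (esym E))))))
        => x xX xa xb.
      have [h1 h2] := hMu beta c x bM cM (WX x xX) (nM x xX xb).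
      have [h3 h4] := hc x xX xa.
      by rewrite h1 h2 h3 h4.
    have aM : a \notin M by apply/negP => /(noc a aP).
    have bM' : b \notin M by apply/negP => /(noc b bP).
    case zM: (z \in M).
    * have [h1 h2] := hMu beta z a bM zM Wa aM.
      have [h3 h4] := hMu beta z b bM zM Wb bM'.
      have [h5 h6] := hMu beta z al bM zM alW alM.
      have [h7 h8] := ha beta bX' nb.
      have [h9 h10] := hb beta bX' nb.
      have Ia : InX z a by rewrite /InX -h1 -h2 -h5 -h6 h7 h8 !eqxx.
      have Ib : InX z b by rewrite /InX -h3 -h4 -h5 -h6 h9 h10 !eqxx.
      by move: nQ; rewrite Ia Ib.
    * apply: (@sub1W M a b z beta sM) => [y yM yX|aM'|bM''|zM'].
      - by case: (eqVneq y beta) => // yb; move: (nM y yX yb); rewrite yM.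
      - by rewrite aM' in aM.
      - by rewrite bM'' in bM'.
      - by rewrite zM' in zM.
Qed.


Lemma F1X a b z : a \in PX -> b \in PX -> a != b -> z \in BsX ->
  ~~ InX z a -> ~~ InX z b -> tpX a = tpX b /\ nd z a b.
Proof.
move=> aP bP ab zB na nb.
have := tripleX aP bP ab zB; rewrite (negbTE na) (negbTE nb) /= => /andP[/eqP -> ->].
by [].
Qed.

Lemma F2X a b z : a \in PX -> b \in PX -> z \in BsX ->
  ~~ InX z a -> InX z b -> pr a b = tpX a.
Proof.
move=> aP bP zB na ib.
have ab : a != b by apply: contraNneq na => ->.
have := tripleX aP bP ab zB; rewrite (negbTE na) ib /= => /orP[|].
  by rewrite /InX => /andP[/eqP -> /eqP ->].
case/andP => /eqP E /andP[/eqP h1 /eqP h2]; exfalso; move/negP: na; apply.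
move: ib E; rewrite /InX /tpX => /andP[/eqP h3 /eqP h4] [h5 h6].
by rewrite h1 h2 h3 h4 !eqxx.
Qed.

Hypothesis hVp : prime_in R [set: V].

Lemma ZX a : a \in PX -> exists2 z, z \in BsX & ~~ InX z a.
Proof.
move=> aP; case: (boolP [exists z in BsX, ~~ InX z a]).
  by case/exists_inP => z; exists z.
move=> nex; exfalso.
pose As := [set u in PX | [forall z in BsX, InX z u]].
have aA : a \in As.
  rewrite inE aP /=; apply/forall_inP => z zB.
  by apply: contraNT nex => nz; apply/exists_inP; exists z.
have hM : module_in R [set: V] (al |: As).
  apply: mod_unif => y; rewrite in_setU1 negb_or => /andP[ya yA].
  exists (col al y, col y al) => m /setU1P [->//|mA].
  move: (mA); rewrite inE => /andP[mP /forall_inP mall].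
  have [_ hm] := (XalphaP _ hal).1 mP.
  case: (V3casesX y) => [yX|yP|yB].
  - by have [h1 h2] := hm y yX ya; rewrite h1 h2.
  - move: yA; rewrite inE yP /= => /forall_inPn [z zB nz].
    have := F2X yP mP zB nz (mall z zB); by case=> -> ->.
  - by move: (mall y yB); rewrite /InX => /andP[/eqP -> /eqP ->].
have aal : a != al by apply: contraNneq (PX_notX aP) => ->.
have E := prime_setT hVp hM (setU11 al As) (setU1r al aA) (negbT (introF eqP (fun e => negP aal (introT eqP (esym e))))).
case: other_al => x xX xa.
move: (in_setT x); rewrite -E => /setU1P [xa'|]; first by rewrite xa' eqxx in xa.
by rewrite inE => /andP[/PX_notX]; rewrite xX.
Qed.

Lemma SX a b : a \in PX -> b \in PX -> a != b -> tpX a = tpX b ->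
  exists2 z, z \in BsX & InX z a != InX z b.
Proof.
move=> aP bP ab tab; case: (boolP [exists z in BsX, InX z a != InX z b]).
  by case/exists_inP => z; exists z.
move=> nex; exfalso.
have hab : forall z, z \in BsX -> InX z b = InX z a.
  move=> z zB; apply/eqP; apply: contraNT nex => ne; apply/exists_inP; exists z => //.
  by rewrite eq_sym.
pose M := [set u in PX | (tpX u == tpX a) && [forall z in BsX, InX z u == InX z a]].
have aM : a \in M by rewrite inE aP eqxx /=; apply/forall_inP => z _.
have bM : b \in M by rewrite inE bP tab eqxx /=; apply/forall_inP => z zB; rewrite hab.
have Mprop : forall m, m \in M ->
    [/\ m \in PX, tpX m = tpX a & forall z, z \in BsX -> InX z m = InX z a].
  move=> m; rewrite inE => /and3P[mP /eqP tm /forall_inP hm]; split=> // z zB.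
  exact/eqP/hm.
have hM : module_in R [set: V] M.
  apply: mod_unif => y yM.
  case: (V3casesX y) => [yX|yP|yB].
  - case: (eqVneq y al) => [->|ya].
      by exists (tpX a) => m /Mprop [mP tm _]; rewrite -tm.
    exists (col al y, col y al) => m /Mprop [mP tm _].
    have [_ hm] := (XalphaP _ hal).1 mP.
    by have [h1 h2] := hm y yX ya; rewrite h1 h2.
  - case: (boolP [exists z in BsX, InX z y != InX z a]).
      case/exists_inP => z zB ne; case Iy: (InX z y).
        have Ia : InX z a = false by move: ne; rewrite Iy; case: (InX z a).
        exists (tpX a) => m /Mprop [mP tm hm].
        have nzm : ~~ InX z m by rewrite hm // Ia.
        by rewrite -tm; apply: F2X mP yP zB nzm Iy.
      have Ia : InX z a = true by move: ne; rewrite Iy; case: (InX z a).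
      exists (col al y, col y al) => m /Mprop [mP tm hm].
      have zm : InX z m by rewrite hm.
      have := F2X yP mP zB (negbT Iy) zm.
      by case=> -> ->.
    move=> nex'; exfalso.
    have ya : y != a by apply: contraNneq yM => ->.
    move/negP: yM; apply.
    have hy : forall z, z \in BsX -> InX z y = InX z a.
      move=> z zB; apply/eqP; apply: contraNT nex' => ne; apply/exists_inP; exists z => //.
    case: (ZX yP) => z zB nz.
    have nza : ~~ InX z a by rewrite -hy.
    have [ty _] := F1X yP aP ya zB nz nza.
    rewrite inE yP ty eqxx /=; apply/forall_inP => z' z'B; by rewrite hy.
  - case Ia: (InX y a).
      exists (col al y, col y al) => m /Mprop [mP tm hm].
      move: (hm y yB); rewrite Ia /InX => /andP[/eqP h1 /eqP h2].
      by rewrite h1 h2.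
    exists (col a y, col y a) => m /Mprop [mP tm hm].
    case: (eqVneq m a) => [->//|ma].
    have n1 : ~~ InX y m by rewrite hm // Ia.
    have n2 : ~~ InX y a by rewrite Ia.
    have [_ /andP[/eqP h1 /eqP h2]] := F1X mP aP ma yB n1 n2.
    by rewrite h1 h2.
have E := prime_setT hVp hM aM bM ab.
have : al \in M by rewrite E in_setT.
by case/Mprop => /PX_notX; rewrite hal.
Qed.
End XCase.

End Main.


Section Final.
Variable V : finType.
Variable R : rel (V * V).
Hypothesis hR : is_2structure R.
Local Notation col := (col R).
Local Notation pr a b := (col a b, col b a).

Lemma mem_cls e p : e \in Eset R -> p \in offd V -> p \in e -> cls R p = e.
Proof.
case/imsetP => q qo -> po pq; symmetry; apply/(cls_eq hR qo po).
by move: pq; rewrite /cls in_set => /andP[].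
Qed.

Lemma col_in a b : a != b -> (a, b) \in col a b.
Proof.
move=> ab; case: hR => refl _ _.
by rewrite /col /cls in_set offdE ab refl // offdE.
Qed.

Lemma const_concl (W : {set V}) e v w : v \in W -> w \in W -> v != w ->
  (forall a b, a \in W -> b \in W -> a != b -> col a b = e) ->
  constant_in R W /\ E_in R W = [set restr e W].
Proof.
move=> vW wW vw h.
suff E : E_in R W = [set restr e W] by split => //; rewrite /constant_in E cards1.
apply/setP => s; rewrite inE; apply/imsetP/eqP.
  case=> [[a b]]; rewrite inE offdE inE /= => /andP[ab /andP[aW bW]] ->.
  by rewrite -(h a b aW bW ab).
move=> ->; exists (v, w); first by rewrite inE offdE vw inE /= vW wW.
by rewrite -(h v w vW wW vw).
Qed.

Lemma lin_concl (W : {set V}) e f v w : e != f -> v \in W -> w \in W -> v != w ->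
  col v w = e -> col w v = f ->
  (forall a b, a \in W -> b \in W -> a != b -> pr a b = (e, f) \/ pr a b = (f, e)) ->
  (forall a b c, a \in W -> b \in W -> c \in W ->
      pr a b = (e, f) -> pr b c = (e, f) -> pr a c = (e, f)) ->
  linear_in R W /\ E_in R W = [set restr e W; restr f W].
Proof.
move=> ef vW wW vw cvw cwv hp ht.
have wv : w != v by rewrite eq_sym.
have nEF : restr e W != restr f W.
  apply/negP => /eqP E.
  have : (v, w) \in restr e W by rewrite /restr inE -cvw col_in // inE /= vW wW.
  rewrite E /restr inE => /andP[vf _].
  move: vf; rewrite -cwv /col /cls in_set => /andP[_ Rwv].
  have o1 : (w, v) \in offd V by rewrite offdE.
  have o2 : (v, w) \in offd V by rewrite offdE.
  have E' := (cls_eq hR o1 o2).2 Rwv.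
  by move: ef; rewrite -cvw -cwv /col E' eqxx.
have restrE : forall a b, a \in W -> b \in W -> a != b -> forall g, g = e \/ g = f -> col a b = g ->
    (restr (col a b) W == restr e W) = (g == e).
  move=> a b aW bW ab g hg ->; case: hg => ->; first by rewrite !eqxx.
  by rewrite eq_sym (negbTE nEF) eq_sym (negbTE ef).
have EE : E_in R W = [set restr e W; restr f W].
  apply/setP => s; rewrite !inE; apply/imsetP/orP.
    case=> [[a b]]; rewrite inE offdE inE /= => /andP[ab /andP[aW bW]] ->.
    rewrite -[cls R (a, b)]/(col a b).
    by case: (hp a b aW bW ab) => -[-> _]; [left | right].
  case=> /eqP ->.
    by exists (v, w); rewrite ?inE ?offdE ?vw ?vW ?wW //= -[cls R (v, w)]/(col v w) cvw.
  by exists (w, v); rewrite ?inE ?offdE ?wv ?vW ?wW //= -[cls R (w, v)]/(col w v) cwv.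
split=> //.
have eW : restr e W \in E_in R W by rewrite EE !inE eqxx.
have fW : restr f W \in E_in R W by rewrite EE !inE eqxx orbT.
exists (restr e W), (restr f W); split => //.
have Lchar : forall a b, a \in W -> b \in W -> a != b ->
   (restr (cls R (a, b)) W == restr e W) && (restr (cls R (b, a)) W == restr f W)
   = (pr a b == (e, f)).
  move=> a b aW bW ab.
  have nfe : restr f W != restr e W by rewrite eq_sym.
  case: (hp a b aW bW ab) => -[h1 h2]; rewrite -[cls R (a, b)]/(col a b) -[cls R (b, a)]/(col b a) h1 h2.
    by rewrite !eqxx.
  by rewrite (negbTE nfe) /= xpair_eqE eq_sym (negbTE ef).
split.
- by move=> a aW /=; rewrite eqxx.
- move=> a b c aW bW cW /=.
  case: (eqVneq a b) => [->|ab]; first by move=> /andP[/andP[]].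
  case: (eqVneq b c) => [->|bc]; first by move=> _ /andP[/andP[]].
  rewrite /= (Lchar a b) // (Lchar b c) // => /eqP h1 /eqP h2.
  have h3 := ht a b c aW bW cW h1 h2.
  have ac : a != c.
    apply/eqP => E; subst c; case: h3 => E1 E2; by rewrite -E1 -E2 eqxx in ef.
  by rewrite ac /= (Lchar a c) // h3.
- move=> a b aW bW ab /=.
  have ba : b != a by rewrite eq_sym.
  rewrite ab ba /= (Lchar a b) // (Lchar b a) //.
  by case: (hp a b aW bW ab) => -[h1 h2]; rewrite h1 h2 eqxx ?orbT.
Qed.


Section Finish.
Variables (P Bs : {set V}) (In : V -> V -> bool) (tp : V -> {set V * V} * {set V * V}) (dir : bool).
Hypothesis F1 : forall a b z, a \in P -> b \in P -> a != b -> z \in Bs ->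
  ~~ In z a -> ~~ In z b -> tp a = tp b.
Hypothesis F2 : forall a b z, a \in P -> b \in P -> z \in Bs ->
  ~~ In z a -> In z b -> (if dir then pr a b = tp a else pr b a = tp b).
Hypothesis Z : forall a, a \in P -> exists2 z, z \in Bs & ~~ In z a.
Hypothesis S : forall a b, a \in P -> b \in P -> a != b -> tp a = tp b ->
  exists2 z, z \in Bs & In z a != In z b.

Lemma finish_const v w e : v \in P -> w \in P -> v != w -> tp v = (e, e) ->
  constant_in R P /\ E_in R P = [set restr e P].
Proof.
move=> vP wP vw tv; apply: (const_concl vP wP vw) => a b aP bP ab.
exact: (C1 F1 F2 Z S vP tv aP bP ab).
Qed.

Lemma finish_lin v w e f : e != f -> v \in P -> w \in P -> v != w -> tp v = (e, f) ->
  linear_in R P /\ E_in R P = [set restr e P; restr f P].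
Proof.
move=> ef vP wP vw tv.
have pairs := C2pair F1 F2 Z S vP tv.
have trans := C2trans F1 F2 Z S vP tv ef.
case: (pairs v w vP wP vw) => -[h1 h2].
  exact: (lin_concl ef vP wP vw h1 h2 pairs trans).
have wv : w != v by rewrite eq_sym.
exact: (lin_concl ef wP vP wv h2 h1 pairs trans).
Qed.
End Finish.
End Final.

Theorem lemma3p10 (V : finType) (R : rel (V * V)) (X : {set V}) :
  is_2structure R ->
  X \proper [set: V] ->
  prime_in R X ->
  S3 R X ->
  prime_in R [set: V] ->
  (forall e, e \in Eset R ->
     (1 < #|extX_ef R X e e| ->
        constant_in R (extX R X) /\
        E_in R (extX R X) = [set restr e (extX R X)]) /\
     (forall a, a \in X -> 1 < #|Xalpha_ef R X a e e| ->
        constant_in R (Xalpha R X a) /\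
        E_in R (Xalpha R X a) = [set restr e (Xalpha R X a)])) /\
  (forall e f, e \in Eset R -> f \in Eset R -> e != f ->
     (1 < #|extX_ef R X e f| ->
        linear_in R (extX R X) /\
        E_in R (extX R X) = [set restr e (extX R X); restr f (extX R X)]) /\
     (forall a, a \in X -> 1 < #|Xalpha_ef R X a e f| ->
        linear_in R (Xalpha R X a) /\
        E_in R (Xalpha R X a) = [set restr e (Xalpha R X a); restr f (Xalpha R X a)])).
Proof.
move=> hR _ hXp hS3 hVp.
have [x0 hx0] : exists x0, x0 \in X.
  by apply/card_gt0P; apply: leq_trans (X3 hXp).
have F1a : forall a b z, a \in PA R X -> b \in PA R X -> a != b -> z \in BsA R X ->
    ~~ InA R x0 z a -> ~~ InA R x0 z b -> tpA R x0 a = tpA R x0 b.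
  by move=> a b z aP bP ab zB na nb; case: (F1A hR hXp hS3 hx0 aP bP ab zB na nb).
have F2a : forall a b z, a \in PA R X -> b \in PA R X -> z \in BsA R X ->
    ~~ InA R x0 z a -> InA R x0 z b ->
    (if false then (col R a b, col R b a) = tpA R x0 a
     else (col R b a, col R a b) = tpA R x0 b).
  by move=> a b z aP bP zB na ib; exact: (F2A hR hXp hS3 hx0 aP bP zB na ib).
have ZA' := ZA hR hXp hS3 hx0 hVp.
have SA' := SA hR hXp hS3 hx0 hVp.
have coreX : forall al, al \in X ->
   [/\ (forall a b z, a \in PX R X al -> b \in PX R X al -> a != b -> z \in BsX R X al ->
    ~~ InX R al z a -> ~~ InX R al z b -> tpX R al a = tpX R al b),
    (forall a b z, a \in PX R X al -> b \in PX R X al -> z \in BsX R X al ->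
    ~~ InX R al z a -> InX R al z b ->
    (if true then (col R a b, col R b a) = tpX R al a
     else (col R b a, col R a b) = tpX R al b)),
    (forall a, a \in PX R X al -> exists2 z, z \in BsX R X al & ~~ InX R al z a) &
    (forall a b, a \in PX R X al -> b \in PX R X al -> a != b -> tpX R al a = tpX R al b ->
      exists2 z, z \in BsX R X al & InX R al z a != InX R al z b)].
  move=> al hal; split.
  - by move=> a b z aP bP ab zB na nb; case: (F1X hR hXp hS3 hal aP bP ab zB na nb).
  - by move=> a b z aP bP zB na ib; exact: (F2X hR hXp hS3 hal aP bP zB na ib).
  - exact: (ZX hR hXp hS3 hal hVp).
  - exact: (SX hR hXp hS3 hal hVp).
have efA : forall e f v, e \in Eset R -> f \in Eset R -> v \in extX_ef R X e f ->
    v \in PA R X /\ tpA R x0 v = (e, f).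
  move=> e f v eE fE; rewrite inE => /andP[vP /forall_inP /(_ x0 hx0) /andP[h1 h2]].
  have [vX _] := (extXP hR X v).1 vP.
  have vx : v != x0 by apply: contraNneq vX => ->.
  have xv : x0 != v by rewrite eq_sym.
  split => //; rewrite /tpA /col (mem_cls hR eE _ h1) ?(mem_cls hR fE _ h2) // offdE //.
have efX : forall e f al v, al \in X -> e \in Eset R -> f \in Eset R ->
    v \in Xalpha_ef R X al e f -> v \in PX R X al /\ tpX R al v = (e, f).
  move=> e f al v hal eE fE; rewrite inE => /andP[vP /andP[h1 h2]].
  have [vX _] := (XalphaP hR (X:=X) v hal).1 vP.
  have vx : v != al by apply: contraNneq vX => ->.
  have xv : al != v by rewrite eq_sym.
  split => //; rewrite /tpX /col (mem_cls hR eE _ h1) ?(mem_cls hR fE _ h2) // offdE //.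
split.
  move=> e eE; split.
    case/card_gt1P => v [w [vS wS vw]].
    have [vP tv] := efA e e v eE eE vS; have [wP _] := efA e e w eE eE wS.
    exact: (finish_const (dir:=false) F1a F2a ZA' SA' vP wP vw tv).
  move=> al hal /card_gt1P [v [w [vS wS vw]]].
  have [vP tv] := efX e e al v hal eE eE vS; have [wP _] := efX e e al w hal eE eE wS.
  case: (coreX al hal) => F1x F2x Zx Sx.
  exact: (finish_const (dir:=true) F1x F2x Zx Sx vP wP vw tv).
move=> e f eE fE ef; split.
  case/card_gt1P => v [w [vS wS vw]].
  have [vP tv] := efA e f v eE fE vS; have [wP _] := efA e f w eE fE wS.
  exact: (finish_lin hR (dir:=false) F1a F2a ZA' SA' ef vP wP vw tv).
move=> al hal /card_gt1P [v [w [vS wS vw]]].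
have [vP tv] := efX e f al v hal eE fE vS; have [wP _] := efX e f al w hal eE fE wS.
case: (coreX al hal) => F1x F2x Zx Sx.
exact: (finish_lin hR (dir:=true) F1x F2x Zx Sx ef vP wP vw tv).
Qed.
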